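(* Let $h\in\mathbb{N}$, $b>0$ and $m>hb$. Suppose $\nu$ is a $b$-balanced product probability measure on $[m]^n$ and $\mathcal{F}_1,\dots,\mathcal{F}_h\subset[m]^n$ satisfy $\prod_{j=1}^h\nu(\mathcal{F}_j)>2^hb/(m-hb)$. Then $\mathcal{F}_1,\dots,\mathcal{F}_h$ cross contain an $h$-matching, i.e. there are $x^j\in\mathcal{F}_j$ ($j\in[h]$) such that for all distinct $j,j'\in[h]$ there is no $i\in[n]$ with $x^j_i=x^{j'}_i$.
   Context: A product measure $\nu=\prod_{i=1}^n\nu_i$ on $[m]^n$ is $b$-balanced if $\nu_i(x)\le b/m$ for all $i\in[n]$ and $x\in[m]$. *)

(* Defs.v *)
From mathcomp Require Import all_boot all_order all_algebra.
Set Implicit Arguments. Unset Strict Implicit. Unset Printing Implicit Defensive.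
Import Order.TTheory GRing.Theory Num.Theory.
Local Open Scope ring_scope.

(* Points of [m]^n are finite functions 'I_n -> 'I_m. A product measure on
   [m]^n is given by its coordinate marginals nu i : 'I_m -> R. *)
Definition point (m n : nat) := {ffun 'I_n -> 'I_m}.

Definition is_prob_marginals (R : realFieldType) (m n : nat)
  (nu : 'I_n -> 'I_m -> R) : Prop :=
  forall i : 'I_n, (forall x, 0 <= nu i x) /\ \sum_(x < m) nu i x = 1.

Definition balanced (R : realFieldType) (m n : nat) (b : R)
  (nu : 'I_n -> 'I_m -> R) : Prop :=
  forall (i : 'I_n) (x : 'I_m), nu i x <= b / m%:R.

Definition prod_measure (R : realFieldType) (m n : nat)
  (nu : 'I_n -> 'I_m -> R) (F : {set point m n}) : R :=
  \sum_(x in F) \prod_(i < n) nu i (x i).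

Definition cross_matching (m n h : nat) (F : 'I_h -> {set point m n}) : Prop :=
  exists x : 'I_h -> point m n,
    (forall j, x j \in F j) /\
    (forall j j' : 'I_h, j != j' -> forall i : 'I_n, x j i != x j' i).

(* Main.v *)
Require Import Defs.
From mathcomp Require Import all_boot all_order all_algebra.
From mathcomp Require Import ring lra zify.
Set Implicit Arguments. Unset Strict Implicit. Unset Printing Implicit Defensive.
Import Order.TTheory GRing.Theory Num.Theory.
Local Open Scope ring_scope.

Section Arith.
Variable R : realFieldType.

Lemma prod_1m_ge h (x : 'I_h -> R) :
  (forall j, 0 <= x j <= 1) -> 1 - \sum_(j < h) x j <= \prod_(j < h) (1 - x j).
Proof.
elim: h x => [|h IH] x Hx; first by rewrite !big_ord0 subr0.
rewrite big_ord_recr big_ord_recr /=.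
have := IH (fun j => x (widen_ord (leqnSn h) j)) (fun j => Hx _).
set P := \prod_(_ < _) _; set S := \sum_(_ < _) _ => HP.
have HS : 0 <= S by apply: sumr_ge0 => j _; case/andP: (Hx (widen_ord (leqnSn h) j)).
case/andP: (Hx ord_max) => a0 a1.
nra.
Qed.

Lemma powdiff_le n (a b : R) : 0 <= b -> b <= a ->
  a ^+ n.+1 - b ^+ n.+1 <= n.+1%:R * (a - b) * a ^+ n.
Proof.
move=> b0 ba; elim: n => [|n IH]; first by rewrite !expr1 expr0 mulr1 mul1r.
have a0 : 0 <= a by apply: le_trans ba.
have hb : b ^+ n.+1 <= a ^+ n.+1 by apply: lerXn2r; rewrite ?nnegrE.
have han : 0 <= a ^+ n by apply: exprn_ge0.
rewrite (exprS a n.+1) (exprS b n.+1) -[n.+2%:R]natr1.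
have e : a * a ^+ n.+1 - b * b ^+ n.+1 = a * (a ^+ n.+1 - b ^+ n.+1) + (a - b) * b ^+ n.+1 by ring.
rewrite e exprS.
set u := a ^+ n.+1 - b ^+ n.+1 in IH *.
set v := b ^+ n.+1 in hb *.
rewrite exprS in hb.
have h1 : a * u <= a * (n.+1%:R * (a - b) * a ^+ n) by apply: ler_wpM2l.
have h2 : (a - b) * v <= (a - b) * (a * a ^+ n) by apply: ler_wpM2l; rewrite ?subr_ge0.
set N := n.+1%:R in h1 *. set w := a ^+ n in h1 h2 *.
have hu : u = a * w - v by rewrite /u /w /v exprS.
rewrite hu in h1. nra.
Qed.

Lemma phi_mono n (x y : R) : 0 <= y -> y <= x -> x * n.+1%:R <= 1 ->
  y * (1 - y) ^+ n <= x * (1 - x) ^+ n.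
Proof.
elim: n x y => [|n IH] x y y0 yx hx; first by rewrite !expr0 !mulr1.
have x0 : 0 <= x by apply: le_trans yx.
have hN : (n.+1%:R : R) + 1 = n.+2%:R by rewrite natr1.
have hx' : x * n.+1%:R <= 1 by rewrite -hN in hx; nra.
have IH' := IH x y y0 yx hx'.
have x1 : x <= 1 by rewrite -hN in hx; have : (0:R) <= n.+1%:R by []; nra.
have b0 : 0 <= 1 - x by rewrite subr_ge0.
have ba : 1 - x <= 1 - y by lra.
have P := powdiff_le n b0 ba.
rewrite !exprS.
set A := (1 - y) ^+ n in IH' P *; set B := (1 - x) ^+ n in IH' P *.
set N := n.+1%:R in P hx' hN hx *.
have B0 : 0 <= B by apply: exprn_ge0; lra.
have A0 : 0 <= A by apply: exprn_ge0; lra.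
rewrite !exprS -/A -/B in P.
have e1 : y * ((1 - y) * A - (1 - x) * B) <= y * (N * (1 - y - (1 - x)) * A) by apply: ler_wpM2l.
have e2 : N * (x - y) * (y * A) <= N * (x - y) * (x * B).
  apply: ler_wpM2l => //; apply: mulr_ge0; [rewrite /N; by [] | lra].
have e3 : (x - y) * B * (N * x - (1 - x)) <= 0.
  apply: mulr_ge0_le0; [apply: mulr_ge0 => //; lra | rewrite -hN in hx; lra].
nra.
Qed.


Variable m : nat.

Definition mu (p g : 'I_m -> R) := \sum_c p c * g c.

Lemma mu_rem (p g : 'I_m -> R) (c : 'I_m) :
  mu (fun c' => if c' == c then 0 else p c' / (1 - p c)) g = (mu p g - p c * g c) / (1 - p c).
Proof.
rewrite /mu (bigD1 c) //= eqxx mul0r add0r.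
rewrite [X in (X - _) / _](bigD1 c) //= addrC addrK mulr_suml.
apply: eq_bigr => c' /negbTE ->; by rewrite mulrAC.
Qed.

Lemma exists_pos (p : 'I_m -> R) : \sum_c p c = 1 -> exists c, 0 < p c.
Proof.
move=> p1; case: (boolP [exists c, 0 < p c]) => [/existsP//|/existsPn H].
have : \sum_c p c <= 0 by apply: sumr_le0 => c _; rewrite leNgt H.
by rewrite p1 ler10.
Qed.

Lemma Lstar h : forall (p : 'I_m -> R) (f : 'I_h -> 'I_m -> R) (beta : R),
  (forall c, 0 <= p c) -> (forall c, p c <= beta) -> \sum_c p c = 1 ->
  (forall j c, 0 <= f j c <= 1) ->
  beta * (h%:R ^+ 2) <= 1 ->
  (forall j, h%:R * beta <= mu p (f j) * (1 - (h%:R - 1) * beta)) ->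
  exists a : 'I_h -> 'I_m, injective a /\ (forall j, 0 < p (a j)) /\
    \prod_j mu p (f j) <= \prod_j f j (a j).
Proof.
elim: h => [|h IH] p f beta p0 pb p1 f01 bh hmu.
  have [c0 hc0] := exists_pos p1.
  exists (fun _ => c0); split; first by case.
  by split; [case | rewrite !big_ord0].
have [c0 hc0] := exists_pos p1.
have beta0 : 0 < beta by apply: lt_le_trans (pb c0).
have hS : (h.+1%:R : R) = h%:R + 1 by rewrite -natr1.
have h0 : (0 : R) <= h%:R by [].
have hm1 : (h.+1%:R : R) - 1 = h%:R by rewrite hS addrK.
rewrite hm1 in hmu.
have hb1 : h%:R * beta < 1 by rewrite hS in bh; nra.
pose mu_ j := mu p (f j).
have mupos j : 0 < mu_ j.
  have := hmu j; rewrite hS /mu_ => H; nra.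
have mule1 j : mu_ j <= 1.
  rewrite /mu_ /mu -p1; apply: ler_sum => c _.
  have := f01 j c; have := p0 c; move=> a /andP[b1 b2]; nra.
have Pi0 : (fun kc : 'I_h.+1 * 'I_m => 0 < p kc.2) (ord0, c0) by [].
case: (@arg_maxP _ _ _ (ord0, c0) (fun kc : 'I_h.+1 * 'I_m => 0 < p kc.2)
   (fun kc => f kc.1 kc.2 / mu_ kc.1) Pi0) => [[k c]] /= pc Hmax.
set r := f k c / mu_ k.
have Hmax' j c' : 0 < p c' -> f j c' / mu_ j <= r.
  by move=> hc'; apply: (Hmax (j, c')).
have r1 : 1 <= r.
  have : mu_ k <= r * mu_ k.
    rewrite {1}/mu_ /mu -[X in _ <= _ * X]mulr1 -p1 !mulr_sumr.
    apply: ler_sum => c' _.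
    have := p0 c'; rewrite le0r => /orP[/eqP->|hc']; first by rewrite !mul0r !mulr0.
    have := Hmax' k c' hc'; rewrite ler_pdivrMr // => H.
    rewrite mulrA [X in _ <= X]mulrC; apply: ler_wpM2l; [exact: ltW | done].
  have := mupos k; nra.
pose pi j := p c * f j c / mu_ j.
have pi0 j : 0 <= pi j.
  apply: divr_ge0; last exact: ltW (mupos j).
  by apply: mulr_ge0; [exact: ltW | case/andP: (f01 j c)].
have pit j : pi j <= p c * r.
  rewrite /pi -mulrA; apply: ler_wpM2l; first exact: ltW.
  exact: Hmax'.
have pik : pi k = p c * r by rewrite /pi /r mulrA.
have pi_small j : pi j * h.+1%:R <= 1.
  have hj : h.+1%:R * beta <= mu_ j * (1 - h%:R * beta) := hmu j.
  have := pb c; have := mupos j; have := f01 j c; case/andP => f0 f1.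
  move=> mj pcb.
  have E : pi j * mu_ j = p c * f j c by rewrite /pi divfK // gt_eqF.
  have pf : p c * f j c <= beta by have := p0 c; nra.
  rewrite hS in hj *. set x := pi j in E *. set M := mu_ j in E mj hj *.
  have hbeta : 0 <= h%:R * beta by apply: mulr_ge0 => //; exact: ltW.
  have s1 : x * M * (h%:R + 1) = p c * f j c * (h%:R + 1) by rewrite E.
  have s2 : p c * f j c * (h%:R + 1) <= beta * (h%:R + 1) by apply: ler_wpM2r => //; lra.
  have s4 : 0 <= M * (h%:R * beta) by apply: mulr_ge0 => //; exact: ltW.
  have s3 : M * (1 - h%:R * beta) <= M by lra.
  have : x * (h%:R + 1) * M <= 1 * M by lra.
  by rewrite ler_pM2r.
have sumpi : \sum_j pi j <= 1.
  have : \sum_(j < h.+1) pi j * h.+1%:R <= \sum_(j < h.+1) 1 by apply: ler_sum => j _; exact: pi_small.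
  rewrite -mulr_suml sumr_const card_ord => H.
  have hpos : (0 : R) < h.+1%:R by rewrite ltr0n.
  by rewrite -(ler_pM2r hpos) mul1r.
have pi1 j : pi j <= 1.
  have := pi_small j; have := pi0 j; rewrite hS => a b; nra.
have r0 : 0 <= r by apply: le_trans r1.
set t := p c * r in pit pik.
have pct : p c <= t by rewrite /t; have := pc; nra.
have HS0 : (0 : R) < h.+1%:R by rewrite ltr0n.
have KEY : (1 - p c) ^+ h <= r * \prod_(j < h) (1 - pi (lift k j)).
  case: (lerP (t * h.+1%:R) 1) => ht.
  - have t1 : t <= 1 by rewrite hS in ht; have := pi0 k; rewrite pik; nra.
    have hprod : (1 - t) ^+ h <= \prod_(j < h) (1 - pi (lift k j)).
      have -> : (1 - t) ^+ h = \prod_(j < h) (1 - t) by rewrite prodr_const card_ord.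
      apply: ler_prod => j _; apply/andP; split; first by rewrite subr_ge0.
      by rewrite lerB.
    have hphi := phi_mono (ltW pc) pct ht.
    rewrite -(ler_pM2l pc).
    apply: (le_trans hphi).
    rewrite /t -mulrA; apply: ler_wpM2l; first exact: ltW.
    by apply: ler_wpM2l.
  - have hsum : \sum_(j < h) pi (lift k j) <= 1 - t.
      move: sumpi; rewrite (bigD1_ord k) //= pik => H; lra.
    have hprod : t <= \prod_(j < h) (1 - pi (lift k j)).
      apply: le_trans (prod_1m_ge _); first lra.
      by move=> j; rewrite pi0 pi1.
    have tt : p c <= t * t.
      have H1 : 1 < (t * h.+1%:R) ^+ 2.
        by rewrite expr_gt1 // ?ht //; apply: ltW; apply: lt_trans ht.
      have H2 : p c * h.+1%:R ^+ 2 <= 1.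
        apply: le_trans bh; apply: ler_wpM2r => //; exact: exprn_ge0 (ltW HS0).
      have H3 : p c * h.+1%:R ^+ 2 < t * t * h.+1%:R ^+ 2 by rewrite exprMn mulrA in H1; lra.
      by apply: ltW; rewrite -(ltr_pM2r (exprn_gt0 2 HS0)).
    have rt1 : 1 <= r * t.
      rewrite -(ler_pM2l pc) mulr1 mulrA -/t; exact: tt.
    have h1p : (1 - p c) ^+ h <= 1.
      apply: exprn_ile1; last by rewrite lerBlDr lerDl ltW.
      rewrite subr_ge0; apply: le_trans (pb c) _; have := beta0; rewrite hS in bh; nra.
    apply: le_trans h1p _; apply: le_trans rt1 _; by apply: ler_wpM2l.
pose p' c' := if c' == c then 0 else p c' / (1 - p c).
pose f' (j : 'I_h) := f (lift k j).
have hb1' : (0 < h)%N -> beta < 1.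
  move=> hpos; have : (1 : R) <= h%:R by rewrite ler1n.
  rewrite hS in bh; move=> H; nra.
have pc1 : (0 < h)%N -> 0 < 1 - p c.
  by move=> /hb1' hb; rewrite subr_gt0; apply: le_lt_trans (pb c) hb.
have mu' j : mu p' (f' j) = mu_ (lift k j) * (1 - pi (lift k j)) / (1 - p c).
  rewrite mu_rem /pi /mu_ /f' mulrBr mulr1 [mu p (f (lift k j)) * _]mulrC divfK //.
  by rewrite gt_eqF // (mupos (lift k j)).
have [a' [a'inj [a'pos a'prod]]] : exists a' : 'I_h -> 'I_m, injective a' /\
    (forall j, 0 < p' (a' j)) /\ \prod_j mu p' (f' j) <= \prod_j f' j (a' j).
  case: (posnP h) => [hz | hpos].
    have nj (j1 : 'I_h) : False.
      by have := leq_trans (ltn_ord j1) (eq_leq hz); rewrite ltn0.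
    exists (fun _ => c); split; first by move=> j1; case: (nj j1).
    split; first by move=> j1; case: (nj j1).
    by rewrite !big1 // => j1 _; case: (nj j1).
  have B1 := hb1' hpos; have P1 := pc1 hpos.
  have D0 : 0 < 1 - beta by rewrite subr_gt0.
  apply: (IH p' f' (beta / (1 - beta))).
  - by move=> c'; rewrite /p'; case: eqP => _ //; apply: divr_ge0 => //; exact: ltW.
  - move=> c'; rewrite /p'; case: eqP => _.
      by apply: divr_ge0; [exact: ltW | exact: ltW].
    rewrite ler_pdivrMr // mulrAC ler_pdivlMr //.
    have := pb c'; have := pb c; have := p0 c'; have := p0 c; nra.
  - rewrite (bigD1 c) //= /p' eqxx add0r.
    rewrite (eq_bigr (fun c' => p c' / (1 - p c))); last by move=> c' /negbTE ->.
    rewrite -mulr_suml.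
    move: p1; rewrite (bigD1 c) //= => p1.
    have -> : \sum_(i < m | i != c) p i = 1 - p c by rewrite -p1 addrC addrK.
    by rewrite divff // gt_eqF.
  - by move=> j c'; exact: f01.
  - rewrite mulrAC ler_pdivrMr // mul1r.
    rewrite hS in bh; have := beta0; nra.
  - move=> j; rewrite mu_rem.
    have hmj : h.+1%:R * beta <= mu_ (lift k j) * (1 - h%:R * beta) := hmu (lift k j).
    set M := mu_ (lift k j) in hmj *.
    have F01 := f01 (lift k j) c; case/andP: F01 => F0 F1.
    set F := f (lift k j) c in F0 F1 *.
    have M0 : 0 <= M by exact: ltW (mupos _).
    have MB : beta <= M.
      rewrite hS in hmj.
      have s4 : 0 <= M * (h%:R * beta) by apply: mulr_ge0 => //; apply: mulr_ge0 => //; exact: ltW.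
      have : M * (1 - h%:R * beta) <= M by lra.
      have := beta0; nra.
    set mu2 := (mu p (f' j) - p c * f' j c) / (1 - p c).
    have mu2e : mu2 = (M - p c * F) / (1 - p c) by [].
    have Hmu2 : M - beta <= mu2.
      rewrite mu2e ler_pdivlMr //.
      have := pb c; have := p0 c; have := F0; have := F1; nra.
    have e : 1 - (h%:R - 1) * (beta / (1 - beta)) = (1 - h%:R * beta) / (1 - beta).
      by field; rewrite gt_eqF.
    rewrite e mulrA mulrA ler_pM2r ?invr_gt0 //.
    have hb2 : 0 < 1 - h%:R * beta by rewrite subr_gt0.
    have : (M - beta) * (1 - h%:R * beta) <= mu2 * (1 - h%:R * beta) by apply: ler_wpM2r => //; exact: ltW.
    rewrite hS in hmj; have := beta0; nra.
have Dph : 0 < (1 - p c) ^+ h.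
  case: (posnP h) => [->|hpos]; first by rewrite expr0 ltr01.
  by apply: exprn_gt0; exact: pc1.
exists (fun i => if unlift k i is Some j then a' j else c).
split.
  move=> i1 i2.
  case: (unliftP k i1) => [j1 ->|->]; case: (unliftP k i2) => [j2 ->|->] //.
  - by move/a'inj ->.
  - by move=> E; have := a'pos j1; rewrite E /p' eqxx ltxx.
  - by move=> E; have := a'pos j2; rewrite -E /p' eqxx ltxx.
split.
  move=> i; case: (unliftP k i) => [j _|_] //.
  have := a'pos j; rewrite /p'; case: eqP => [_|_ H]; first by rewrite ltxx.
  rewrite lt0r p0 andbT; apply/eqP => e; by rewrite e mul0r ltxx in H.
rewrite (bigD1_ord k) //= [X in _ <= X](bigD1_ord k) //= unlift_none.
rewrite [X in _ <= _ * X](eq_bigr (fun j => f' j (a' j))); last by move=> j _; rewrite liftK.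
have Hm' : \prod_(j < h) mu p' (f' j) =
    (\prod_(j < h) mu_ (lift k j)) * ((\prod_(j < h) (1 - pi (lift k j))) / (1 - p c) ^+ h).
  rewrite (eq_bigr _ (fun j _ => mu' j)) big_split big_split /= prodr_const card_ord exprVn.
  by rewrite mulrA.
rewrite Hm' in a'prod.
set PM := \prod_(j < h) mu_ (lift k j) in a'prod *.
set Q := \prod_(j < h) (1 - pi (lift k j)) in a'prod KEY *.
have PM0 : 0 <= PM by apply: prodr_ge0 => j _; exact: ltW (mupos _).
have g1 : 1 <= r * Q / (1 - p c) ^+ h by rewrite ler_pdivlMr // mul1r.
have fkc : f k c = r * mu_ k by rewrite /r divfK // gt_eqF.
have fk0 : 0 <= f k c by case/andP: (f01 k c).
apply: le_trans (ler_wpM2l fk0 a'prod).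
rewrite fkc.
have mk0 : 0 <= mu_ k * PM by apply: mulr_ge0 => //; exact: ltW.
have : mu_ k * PM * 1 <= mu_ k * PM * (r * Q / (1 - p c) ^+ h) by apply: ler_wpM2l.
rewrite mulr1 => H; apply: le_trans H _.
have -> : mu_ k * PM * (r * Q / (1 - p c) ^+ h) = r * mu_ k * (PM * (Q / (1 - p c) ^+ h)) by ring.
by [].
Qed.

End Arith.

Lemma two_h h : (2 * h <= 2 ^ h)%N.
Proof.
elim: h => // h IH; rewrite expnS; case: h IH => // h IH.
have : (1 <= 2 ^ h.+1)%N by rewrite expn_gt0.
lia.
Qed.

Lemma sq_h h : (h * h <= 2 ^ h + h)%N.
Proof. elim: h => // h IH; rewrite expnS; have := two_h h; nia. Qed.

Section Main.
Variable R : realFieldType.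
Variable m : nat.

Definition pcons n (a : 'I_m) (x : point m n) : point m n.+1 :=
  [ffun i => if unlift ord0 i is Some j then x j else a].
Definition ptail n (x : point m n.+1) : point m n := [ffun j => x (lift ord0 j)].
Definition slice n (F : {set point m n.+1}) (a : 'I_m) : {set point m n} :=
  [set x | pcons a x \in F].

Lemma pcons0 n a (x : point m n) : pcons a x ord0 = a.
Proof. by rewrite ffunE unlift_none. Qed.

Lemma pconsS n a (x : point m n) j : pcons a x (lift ord0 j) = x j.
Proof. by rewrite ffunE liftK. Qed.

Lemma sum_point n (G : point m n.+1 -> R) :
  \sum_x G x = \sum_a \sum_(x' : point m n) G (pcons a x').
Proof.
rewrite pair_bigA /= (reindex (fun p : 'I_m * point m n => pcons p.1 p.2)) //=.
exists (fun x : point m n.+1 => (x ord0, ptail x)) => [[a x'] _ | x _] /=.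
  rewrite pcons0; congr (_, _); apply/ffunP => j; by rewrite ffunE pconsS.
apply/ffunP => i; rewrite ffunE; case: unliftP => [j ->|->]; by rewrite ?ffunE.
Qed.

Lemma pmeasS n (nu : 'I_n.+1 -> 'I_m -> R) F :
  prod_measure nu F =
  \sum_a nu ord0 a * prod_measure (fun i => nu (lift ord0 i)) (slice F a).
Proof.
rewrite /prod_measure big_mkcond sum_point; apply: eq_bigr => a _.
rewrite mulr_sumr [RHS]big_mkcond; apply: eq_bigr => x' _.
rewrite /slice inE; case: (pcons a x' \in F); last by [].
rewrite big_ord_recl pcons0; congr (_ * _); apply: eq_bigr => i _; by rewrite pconsS.
Qed.

Lemma pmeas_total n (nu : 'I_n -> 'I_m -> R) :
  (forall i, \sum_a nu i a = 1) -> prod_measure nu setT = 1.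
Proof.
elim: n nu => [|n IH] nu H.
  rewrite /prod_measure (eq_bigr (fun _ => 1)) => [|x _]; last by rewrite big_ord0.
  by rewrite sumr_const cardsT card_ffun !card_ord expn0.
rewrite pmeasS -(H ord0); apply: eq_bigr => a _.
have -> : slice [set: point m n.+1] a = setT by apply/setP => x; rewrite !inE.
by rewrite IH ?mulr1 // => i; exact: H.
Qed.

Lemma pmeas_ge0 n (nu : 'I_n -> 'I_m -> R) F :
  (forall i a, 0 <= nu i a) -> 0 <= prod_measure nu F.
Proof. by move=> H; apply: sumr_ge0 => x _; apply: prodr_ge0 => i _. Qed.

Lemma pmeas_le1 n (nu : 'I_n -> 'I_m -> R) F :
  is_prob_marginals nu -> prod_measure nu F <= 1.
Proof.
move=> H; rewrite -(pmeas_total (nu := nu)); last by move=> i; case: (H i).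
rewrite /prod_measure [X in _ <= X]big_mkcond [X in X <= _]big_mkcond.
apply: ler_sum => x _; rewrite inE; case: (x \in F) => //.
by apply: prodr_ge0 => i _; case: (H i).
Qed.

Lemma prod_le_factor h (x : 'I_h -> R) j :
  (forall k, 0 <= x k <= 1) -> \prod_k x k <= x j.
Proof.
move=> H; rewrite (bigD1 j) //=.
have : \prod_(k | k != j) x k <= 1 by apply: prodr_ile1 => k _; exact: H.
case/andP: (H j) => a _ b.
by rewrite -[X in _ <= X]mulr1; apply: ler_wpM2l.
Qed.

Lemma main_ind h (C beta : R) : 0 <= C ->
  h%:R * beta <= C * (1 - (h%:R - 1) * beta) ->
  0 <= 1 - (h%:R - 1) * beta -> beta * h%:R ^+ 2 <= 1 ->
  forall n (nu : 'I_n -> 'I_m -> R) (F : 'I_h -> {set point m n}),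
  is_prob_marginals nu -> (forall i x, nu i x <= beta) ->
  C < \prod_j prod_measure nu (F j) -> cross_matching F.
Proof.
move=> C0 HC H1 Hb; elim=> [|n IH] nu F Hnu Hbal HF.
  have Hne j : exists x, x \in F j.
    case: (set_0Vmem (F j)) => [E|[x Hx]]; last by exists x.
    exfalso; move: HF; rewrite (bigD1 j) //= E /prod_measure big_set0 mul0r.
    by rewrite ltNge C0.
  have [x Hx] := fin_all_exists Hne.
  by exists x; split => // j j' _ [i hi].
pose nu' i := nu (lift ord0 i).
have Hnu' : is_prob_marginals nu' by move=> i; exact: Hnu.
pose f j a := prod_measure nu' (slice (F j) a).
have muE j : prod_measure nu (F j) = mu (nu ord0) (f j) by rewrite pmeasS.
have f01 j a : 0 <= f j a <= 1.
  by rewrite pmeas_le1 // andbT; apply: pmeas_ge0 => i b; case: (Hnu' i) => ->.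
have m01 j : 0 <= prod_measure nu (F j) <= 1.
  by rewrite pmeas_le1 // andbT; apply: pmeas_ge0 => i b; case: (Hnu i) => ->.
have hmu j : h%:R * beta <= mu (nu ord0) (f j) * (1 - (h%:R - 1) * beta).
  rewrite -muE; apply: le_trans HC _; apply: ler_wpM2r => //.
  apply: ltW; apply: lt_le_trans HF _; exact: prod_le_factor.
have [a [ainj [apos aprod]]] := Lstar (fun c => proj1 (Hnu ord0) c) (fun c => Hbal ord0 c)
   (proj2 (Hnu ord0)) f01 Hb hmu.
have HF' : C < \prod_j prod_measure nu' (slice (F j) (a j)).
  apply: lt_le_trans HF _; rewrite (eq_bigr _ (fun j _ => muE j)); exact: aprod.
have [y [Hy1 Hy2]] := IH nu' (fun j => slice (F j) (a j)) Hnu' (fun i => Hbal _) HF'.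
exists (fun j => pcons (a j) (y j)); split.
  by move=> j; move: (Hy1 j); rewrite inE.
move=> j j' jj' i; case: (unliftP ord0 i) => [i' ->|->].
  by rewrite !pconsS; exact: Hy2.
by rewrite !pcons0; apply: contra jj' => /eqP /ainj ->.
Qed.

End Main.


Unset Implicit Arguments.

Theorem lemma8p3 (R : realFieldType) (h m n : nat) (b : R)
  (nu : 'I_n -> 'I_m -> R) (F : 'I_h -> {set point m n}) :
  0 < b -> h%:R * b < m%:R ->
  is_prob_marginals nu -> balanced b nu ->
  \prod_(j < h) prod_measure nu (F j) > 2 ^+ h * b / (m%:R - h%:R * b) ->
  cross_matching F.
Proof.
move=> b0 hbm Hnu Hbal HF.
have h0 : (0 : R) <= h%:R by [].
have hb0 : 0 <= h%:R * b by apply: mulr_ge0 => //; exact: ltW.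
have m0 : (0 : R) < m%:R by apply: le_lt_trans hbm.
set beta := b / m%:R.
have beta0 : 0 < beta by apply: divr_gt0.
have hbeta : h%:R * beta < 1 by rewrite /beta mulrA ltr_pdivrMr // mul1r.
set C := 2 ^+ h * b / (m%:R - h%:R * b) in HF.
have D0 : 0 < m%:R - h%:R * b by rewrite subr_gt0.
have two0 : (0 : R) <= 2 ^+ h by apply: exprn_ge0.
have C0 : 0 <= C by apply: divr_ge0; [apply: mulr_ge0 => //; exact: ltW | exact: ltW].
have CE : C * (1 - h%:R * beta) = 2 ^+ h * beta.
  rewrite /C /beta; field; apply/andP; split; [exact: lt0r_neq0 | exact: lt0r_neq0].
have Hprod1 : \prod_j prod_measure nu (F j) <= 1.
  apply: prodr_ile1 => j _; rewrite pmeas_le1 // andbT.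
  by apply: pmeas_ge0 => i a; case: (Hnu i) => ->.
have C1 : C < 1 by apply: lt_le_trans HF Hprod1.
have h2 : (h%:R : R) <= 2 ^+ h.
  have := ltnW (ltn_expl h (ltnSn 1)); rewrite -(ler_nat R) natrX => H; exact: H.
have hsq : (h%:R : R) ^+ 2 <= 2 ^+ h + h%:R.
  have := sq_h h; rewrite -(ler_nat R) natrD natrM natrX expr2 => H; exact: H.
apply: (main_ind (C := C) (beta := beta)) HF => //.
- have -> : C * (1 - (h%:R - 1) * beta) = C * (1 - h%:R * beta) + C * beta by ring.
  rewrite CE; have : 0 <= C * beta by apply: mulr_ge0 => //; exact: ltW.
  have : h%:R * beta <= 2 ^+ h * beta by apply: ler_wpM2r => //; exact: ltW.
  lra.
- have -> : (h%:R - 1) * beta = h%:R * beta - beta by ring.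
  lra.
- have H1 : 2 ^+ h * beta < 1 - h%:R * beta.
    by rewrite -CE -[X in _ < X]mul1r ltr_pM2r // subr_gt0.
  have : beta * h%:R ^+ 2 <= beta * (2 ^+ h + h%:R) by apply: ler_wpM2l => //; exact: ltW.
  lra.
Qed.
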